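(* Let $f\in C^1(\mathbb{R}^n,\mathbb{R}^n)$ and let $x_0$ be a nondegenerate $T$-periodic limit cycle of $\dot x=f(x)$, $T>0$. Let $A_{n-1}$ be any real $n\times(n-1)$ matrix such that the $n\times n$ matrix $(\dot x_0(0),A_{n-1})$ is nonsingular, and define, for $v\in\mathbb{R}^{n-1}$ near $0$, $S(v)=\Omega(T,0,x_0(0)+A_{n-1}v)$. Then $\dot x_0(0)\notin S'(0)(\mathbb{R}^{n-1})$.
   Context: $\Omega(\cdot,t_0,\xi)$ denotes the solution of the autonomous system $\dot x=f(x)$ satisfying $\Omega(t_0,t_0,\xi)=\xi$. The linearized system along $x_0$ is $\dot y=f'(x_0(t))y$; if $Y(t)$ is its fundamental matrix with $Y(0)=I$, the eigenvalues of $Y(T)$ are its characteristic multipliers ($+1$ is always one of them, since $\dot x_0$ is a $T$-periodic solution). The $T$-periodic limit cycle $x_0$ is called nondegenerate if the characteristic multiplier $+1$ of $\dot y=f'(x_0(t))y$ has algebraic multiplicity $1$ (as a root of the characteristic polynomial of $Y(T)$). *)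

(* Defs.v *)
From HB Require Import structures.
From mathcomp Require Import all_boot all_order all_algebra.
From mathcomp Require Import all_classical all_reals all_analysis.
Set Implicit Arguments. Unset Strict Implicit. Unset Printing Implicit Defensive.
Import Order.TTheory GRing.Theory Num.Theory.
Import numFieldNormedType.Exports.
Local Open Scope ring_scope.
Local Open Scope classical_set_scope.

Definition is_C1 (R : realType) (n : nat) (f : 'rV[R]_n -> 'rV[R]_n) : Prop :=
  (forall x, differentiable f x) /\ continuous (fun x => 'J f x).

Definition solution_on (R : realType) (n : nat) (f : 'rV[R]_n -> 'rV[R]_n)
  (a b : R) (y : R -> 'rV[R]_n) : Prop :=
  forall t : R, a < t < b -> is_derive t (1 : R) y (f (y t)).

Definition global_solution (R : realType) (n : nat) (f : 'rV[R]_n -> 'rV[R]_n)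
  (y : R -> 'rV[R]_n) : Prop :=
  forall t : R, is_derive t (1 : R) y (f (y t)).

Definition limit_cycle (R : realType) (n : nat) (f : 'rV[R]_n -> 'rV[R]_n)
  (x0 : R -> 'rV[R]_n) (T : R) : Prop :=
  [/\ 0 < T, global_solution f x0, (forall t, x0 (t + T) = x0 t),
      (exists t, x0 t != x0 0) &
      exists2 eps : R, 0 < eps &
        forall (y : R -> 'rV[R]_n) (T' : R), 0 < T' -> global_solution f y ->
          (forall t, y (t + T') = y t) -> (exists t, y t != y 0) ->
          (forall t, exists s, `|y t - x0 s| < eps) ->
          range y = range x0].

(* With row vectors the linearization reads y' = y *m 'J f (x0 t) and the rows
   of Y are solutions; Y t is the transpose of the column-convention
   fundamental matrix, so it has the same characteristic polynomial. *)
Definition fundamental_matrix (R : realType) (n : nat)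
  (f : 'rV[R]_n -> 'rV[R]_n) (x0 : R -> 'rV[R]_n) (Y : R -> 'M[R]_n) : Prop :=
  Y 0 = 1%:M /\ forall t : R, is_derive t (1 : R) Y (Y t *m 'J f (x0 t)).

Definition nondegenerate_cycle (R : realType) (n : nat) (f : 'rV[R]_n -> 'rV[R]_n)
  (x0 : R -> 'rV[R]_n) (T : R) : Prop :=
  forall Y : R -> 'M[R]_n, fundamental_matrix f x0 Y ->
    mup 1 (char_poly (Y T)) = 1%N.

(* Main.v *)
Require Import Defs.
From HB Require Import structures.
From mathcomp Require Import all_boot all_order all_algebra.
From mathcomp Require Import all_classical all_reals all_analysis.
From mathcomp Require Import ring lra.
Import Order.TTheory GRing.Theory Num.Theory.
Import numFieldNormedType.Exports.
Local Open Scope ring_scope.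
Local Open Scope classical_set_scope.

Section Helpers.
Set Implicit Arguments. Unset Strict Implicit.
Context {R : realType}.

Lemma entry_le m n (M : 'M[R]_(m, n)) i j : `|M i j| <= `|M|.
Proof.
rewrite [leRHS]/Num.Def.normr/= mx_normrE.
by apply: le_trans; last exact: (le_bigmax _ _ (i, j)).
Qed.

Lemma norm_le m n (M : 'M[R]_(m, n)) c : 0 <= c -> (forall i j, `|M i j| <= c) -> `|M| <= c.
Proof.
move=> c0 H; rewrite [leLHS]/Num.Def.normr/= mx_normrE.
by apply: bigmax_le => // -[i j] _; exact: H.
Qed.

Lemma is_derive_shiftT {V : normedModType R} (g : R -> V) (t h : R) dg :
  is_derive (t + h) 1 g dg -> is_derive t 1 (fun s => g (s + h)) dg.
Proof.
move=> [d1 d2].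
have E : (fun k : R => k^-1 *: (((fun s => g (s + h)) \o shift t) (k *: 1) - g (t + h)))
   = (fun k => k^-1 *: ((g \o shift (t+h)) (k *: 1) - g (t+h))).
  by apply/funext => k /=; rewrite addrA.
split; first by rewrite /derivable E.
by rewrite /derive E.
Qed.

Lemma is_derive_entry n (F : R -> 'rV[R]_n) (t : R) dF i :
  is_derive t 1 F dF -> is_derive t 1 (fun s => F s ord0 i) (dF ord0 i).
Proof.
move=> [d1 d2]; split; first by move/derivable_mxP: d1; apply.
by rewrite -d2 derive_mx // mxE.
Qed.



Lemma is_derive_line n (f : 'rV[R]_n -> 'rV[R]_n) (x v : 'rV[R]_n) (t : R) :
  differentiable f (t *: v + x) ->
  is_derive t 1 (fun s => f (s *: v + x)) ('D_v f (t *: v + x)).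
Proof.
move=> df.
have E : (fun k : R => k^-1 *: (((fun s => f (s *: v + x)) \o shift t) (k *: 1) - f (t *: v + x)))
   = (fun k => k^-1 *: ((f \o shift (t *: v + x)) (k *: v) - f (t *: v + x))).
  by apply/funext => k /=; rewrite [k *: 1]mulr1 scalerDl addrA.
split; last by rewrite /derive E.
by rewrite /derivable E; exact: diff_derivable.
Qed.

Lemma rnorm_le n (v : 'rV[R]_n) c : 0 <= c -> (forall i, `|v ord0 i| <= c) -> `|v| <= c.
Proof. by move=> c0 H; apply: norm_le => // i j; rewrite (ord1 i). Qed.

Lemma lip n (f : 'rV[R]_n -> 'rV[R]_n) : is_C1 f -> forall B : R, 0 <= B ->
  exists L : R, 0 <= L /\ forall x y, `|x| <= B -> `|y| <= B ->
     `|f y - f x| <= L * `|y - x|.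
Proof.
move=> [fd Jc] B B0.
pose K := [set v : 'rV[R]_n | forall i, `[-B, B] (v ord0 i)].
have Kc : compact K by apply: (@rV_compact _ _ (fun=> `[-B, B]%classic)) => i; exact: segment_compact.
have KE v : K v <-> `|v| <= B.
  split => [Kv|vB i]; first by apply: rnorm_le => // i; have := Kv i; rewrite /= in_itv /= -ler_norml.
  by rewrite /= in_itv /= -ler_norml (le_trans (entry_le _ _ _)).
have JK : compact ((fun x => 'J f x) @` K).
  by apply: continuous_compact => //; exact: continuous_subspaceT.
have [M [Mr HM]] := compact_bounded JK.
pose M1 := `|M| + 1.
have M1gt : M < M1 by rewrite /M1 (le_lt_trans (ler_norm M)) // ltrDl.
have M10 : 0 <= M1 by rewrite /M1 addr_ge0.
have HJ p : `|p| <= B -> `|'J f p| <= M1.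
  by move=> pB; apply: (HM _ M1gt); exists p => //; apply/KE.
exists (n%:R * M1); split; first by rewrite mulr_ge0.
move=> x y xB yB.
set v := y - x.
apply: rnorm_le; first by rewrite !mulr_ge0.
move=> i; rewrite !mxE.
pose g (s : R) := f (s *: v + x) ord0 i.
pose dg (s : R) := ('D_v f (s *: v + x)) ord0 i.
have gd (s : R) : is_derive s 1 g (dg s).
  by apply: is_derive_entry; apply: is_derive_line; exact: fd.
have gc : {within `[0, 1], continuous g}.
  apply: derivable_within_continuous => s _; exact: ex_derive.
have [c c01 E] := MVT_segment ler01 (fun s _ => gd s) gc.
have -> : f y ord0 i - f x ord0 i = g 1 - g 0.
  by rewrite /g scale1r scale0r add0r /v subrK.
rewrite E subr0 mulr1 /dg deriveEjacobian // mxE.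
have pB : `|c *: v + x| <= B.
  have -> : c *: v + x = c *: y + (1 - c) *: x.
    by rewrite /v scalerBr scalerBl scale1r addrAC -addrA.
  move: c01; rewrite in_itv /= => /andP[c0 c1].
  apply: (le_trans (ler_normD _ _)); rewrite !normrZ !ger0_norm ?subr_ge0 //.
  by apply: (le_trans (lerD (ler_wpM2l c0 yB) (ler_wpM2l _ xB))); rewrite ?subr_ge0 // -mulrDl subrKC mul1r.
apply: (le_trans (ler_norm_sum _ _ _)).
apply: (@le_trans _ _ (\sum_(k < n) (M1 * `|v|))).
  apply: ler_sum => k _; rewrite normrM mulrC; apply: ler_pM => //.
    by apply: (le_trans (entry_le _ k i)); exact: HJ.
  exact: entry_le.
by rewrite sumr_const card_ord -mulrA mulr_natl.
Qed.



Definition sq n (w : 'rV[R]_n) : R := \sum_(i < n) (w ord0 i) ^+ 2.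

Lemma sq_ge0 n (w : 'rV[R]_n) : 0 <= sq w.
Proof. by apply: sumr_ge0 => i _; exact: sqr_ge0. Qed.

Lemma sq_ge n (w : 'rV[R]_n) : `|w| ^+ 2 <= sq w.
Proof.
have [/eqP|] := eqVneq `|w| 0.
  by rewrite normr_eq0 => /eqP ->; rewrite normr0 expr0n /= sq_ge0.
move=> /mx_norm_neq0 [[i j] /= E].
rewrite (_ : `|w| = `|w i j|); last exact: E.
rewrite (ord1 i) real_normK ?num_real // /sq (bigD1 j) //= lerDl.
by apply: sumr_ge0 => k _; exact: sqr_ge0.
Qed.

Lemma sq_le n (w : 'rV[R]_n) : sq w <= n%:R * `|w| ^+ 2.
Proof.
rewrite /sq mulr_natl.
have -> : `|w| ^+ 2 *+ n = \sum_(i < n) `|w| ^+ 2 by rewrite sumr_const card_ord.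
apply: ler_sum => i _.
rewrite -real_normK ?num_real //; apply: lerXn2r; rewrite ?nnegrE //.
exact: entry_le.
Qed.

Lemma is_derive_sq n (w : R -> 'rV[R]_n) (t : R) dw :
  is_derive t 1 w dw ->
  is_derive t 1 (fun s => sq (w s)) (\sum_(i < n) (2 * w t ord0 i) * dw ord0 i).
Proof.
move=> dW.
have H i : is_derive t 1 ((fun s => w s ord0 i) ^+ 2) ((2%:R * w t ord0 i ^+ 1) *: dw ord0 i).
  apply: is_deriveX; exact: is_derive_entry.
have := is_derive_sum H.
rewrite fct_sumE /sq => HH.
have E : (fun x => \sum_(i < n) ((fun s => w s ord0 i) ^+ 2) x) =
         (fun s => \sum_(i < n) w s ord0 i ^+ 2).
  by apply/funext => s; apply: eq_bigr => i _; rewrite exprfctE.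
rewrite E in HH.
apply: (is_derive_eq HH).
by apply: eq_bigr => i _; rewrite expr1.
Qed.



Lemma exp_mono (Q dQ : R -> R) (t0 t1 k : R) : t0 <= t1 ->
  (forall t, t0 <= t <= t1 -> is_derive t 1 Q (dQ t)) ->
  (forall t, t0 < t < t1 -> dQ t + k * Q t <= 0) ->
  Q t1 * expR (k * t1) <= Q t0 * expR (k * t0).
Proof.
move=> t01 dQd hQ.
pose G t := Q t * expR (k * t).
have dG t : t0 <= t <= t1 -> is_derive t 1 G (Q t *: (expR (k * t) * (k *: 1)) + expR (k * t) *: dQ t).
  move=> tI.
  have e1 : is_derive t 1 (fun s : R => k *: s) (k *: 1) by apply: is_deriveZ.
  have e2 : is_derive t 1 (expR \o (fun s : R => k *: s)) (expR (k * t) * (k *: 1)).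
    exact: is_derive1_comp.
  exact: (is_deriveM (dQd t tI) e2).
have := @ler0_derive1_le_cc R G t0 t1.
apply.
- move=> x; rewrite in_itv /= => /andP[a b].
  have xI : t0 <= x <= t1 by rewrite !ltW.
  exact: (ex_derive (is_derive := dG x xI)).
- move=> x; rewrite in_itv /= => /andP[a b].
  have xI : t0 <= x <= t1 by rewrite !ltW.
  rewrite derive1E (derive_val (is_derive := dG x xI)).
  rewrite [k *: 1]mulr1 /GRing.scale /=.
  have := hQ x; rewrite a b => /(_ isT) H.
  have -> : Q x * (expR (k * x) * k) + expR (k * x) * dQ x = expR (k * x) * (dQ x + k * Q x) by ring.
  by rewrite pmulr_rle0 ?expR_gt0.
- apply: derivable_within_continuous => x; rewrite in_itv /= => xI.
  exact: (ex_derive (is_derive := dG x xI)).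
- by rewrite in_itv /= lexx t01.
- by rewrite in_itv /= lexx t01.
- exact: t01.
Qed.


Lemma gronwall n (f : 'rV[R]_n -> 'rV[R]_n) (u z : R -> 'rV[R]_n) (t0 t1 L c : R) :
  t0 <= t1 -> 0 <= L -> 1 + n%:R * L ^+ 2 <= c ->
  (forall t, t0 <= t <= t1 -> is_derive t 1 u (f (u t))) ->
  (forall t, t0 <= t <= t1 -> is_derive t 1 z (f (z t))) ->
  (forall t, t0 < t < t1 -> `|f (u t) - f (z t)| <= L * `|u t - z t|) ->
  sq (u t1 - z t1) <= sq (u t0 - z t0) * expR (c * (t1 - t0)) /\
  sq (u t0 - z t0) <= sq (u t1 - z t1) * expR (c * (t1 - t0)).
Proof.
move=> t01 L0 hc du dz hL.
pose Q t := sq (u t - z t).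
pose dQ t := \sum_(i < n) (2 * (u t - z t) ord0 i) * (f (u t) - f (z t)) ord0 i.
have dQd t : t0 <= t <= t1 -> is_derive t 1 Q (dQ t).
  move=> tI; apply: is_derive_sq.
  exact: (is_deriveB (du t tI) (dz t tI)).
have c0 : 0 <= c.
  by apply: le_trans hc; rewrite addr_ge0 // mulr_ge0 // sqr_ge0.
have bnd t : t0 < t < t1 -> `|dQ t| <= c * Q t.
  move=> tI; set w := u t - z t; set b := f (u t) - f (z t).
  have hb : `|b| <= L * `|w| by exact: hL.
  apply: (le_trans (ler_norm_sum _ _ _)).
  apply: (@le_trans _ _ (Q t + sq b)).
    rewrite /Q /sq -/w -big_split /=; apply: ler_sum => i _.
    move: (w ord0 i) (b ord0 i) => x y.
    have := sqr_ge0 (x - y); have := sqr_ge0 (x + y).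
    rewrite ler_norml; move=> h1 h2; apply/andP; split; nra.
  apply: (@le_trans _ _ (Q t + n%:R * L ^+ 2 * Q t)).
    rewrite lerD2l; apply: (le_trans (sq_le b)); rewrite -mulrA ler_wpM2l //.
    apply: (@le_trans _ _ ((L * `|w|) ^+ 2)).
      by apply: lerXn2r; rewrite ?nnegrE ?mulr_ge0.
    by rewrite exprMn ler_wpM2l ?sqr_ge0 // sq_ge.
  rewrite -{1}(mul1r (Q t)) -mulrDl ler_wpM2r //; exact: sq_ge0.
have e1 : Q t1 * expR ((- c) * t1) <= Q t0 * expR ((- c) * t0).
  apply: exp_mono => // t tI.
  have := bnd t tI; rewrite mulNr; move: (dQ t) (Q t) => a q.
  by rewrite ler_norml => /andP[_ ?]; lra.
have e2 : (- Q) t1 * expR (c * t1) <= (- Q) t0 * expR (c * t0).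
  apply: (@exp_mono _ (fun t => - dQ t)) => //.
    by move=> t tI; apply: is_deriveN; exact: dQd.
  move=> t tI; have := bnd t tI; rewrite (_ : (- Q) t = - Q t) //; move: (dQ t) (Q t) => a q.
  by rewrite ler_norml => /andP[? _]; lra.
have Ep x y : expR (c * (x - y)) = expR (c * x) * expR (- c * y).
  by rewrite -expRD; congr expR; ring.
have EN x : expR (c * x) * expR (- c * x) = 1.
  by rewrite mulNr expRxMexpNx_1.
have := EN t0; have := EN t1; have := expR_gt0 (c * t1); have := expR_gt0 (- c * t0).
move: e1 e2; rewrite !Ep /= -/(Q t0) -/(Q t1) (_ : (- Q) t0 = - Q t0) // (_ : (- Q) t1 = - Q t1) //.
move: (Q t0) (Q t1) (expR (c * t0)) (expR (c * t1)) (expR (- c * t0)) (expR (- c * t1)).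
move=> q0 q1 E0 E1 N0 N1 h1 h2 p1 p2 h3 h4.
split.
  have g1 : q1 * N1 * E1 <= q0 * N0 * E1 by rewrite ler_pM2r.
  have E : q1 = q1 * N1 * E1 by rewrite -mulrA (mulrC N1) h3 mulr1.
  rewrite {1}E; apply: (le_trans g1); by rewrite mulrAC -mulrA.
have g2 : q0 * E0 * N0 <= q1 * E1 * N0 by rewrite ler_pM2r // -lerN2 -!mulNr.
by move: g2; rewrite -mulrA h4 mulr1 -mulrA.
Qed.



Lemma sq_lt1 n (w : 'rV[R]_n) : sq w < 1 -> `|w| <= 1.
Proof.
move=> h; rewrite leNgt; apply/negP => w1; have := sq_ge w.
move: h w1; move: (sq w) `|w| => s a h1 h2 h3; nra.
Qed.

Lemma bootstrap n (f : 'rV[R]_n -> 'rV[R]_n) (u z : R -> 'rV[R]_n) (T L c : R) :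
  0 <= T -> 0 <= L -> 1 + n%:R * L ^+ 2 <= c ->
  (forall t, 0 <= t <= T -> is_derive t 1 u (f (u t))) ->
  (forall t, 0 <= t <= T -> is_derive t 1 z (f (z t))) ->
  (forall t y, 0 <= t <= T -> `|y - z t| <= 1 -> `|f y - f (z t)| <= L * `|y - z t|) ->
  sq (u 0 - z 0) * expR (c * T) < 1 ->
  sq (u T - z T) <= sq (u 0 - z 0) * expR (c * T) /\
  sq (u 0 - z 0) <= sq (u T - z T) * expR (c * T).
Proof.
move=> T0 L0 hc du dz hL small.
pose Q t := sq (u t - z t).
have c0 : 0 <= c.
  by apply: le_trans hc; rewrite addr_ge0 // mulr_ge0 // sqr_ge0.
have G t1 : 0 <= t1 <= T -> (forall t, 0 < t < t1 -> Q t < 1) ->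
    Q t1 <= Q 0 * expR (c * t1) /\ Q 0 <= Q t1 * expR (c * t1).
  move=> /andP[t10 t1T] hQ.
  have := @gronwall n f u z 0 t1 L c t10 L0 hc.
  rewrite subr0; apply.
  - by move=> t /andP[a b]; apply: du; rewrite a (le_trans b).
  - by move=> t /andP[a b]; apply: dz; rewrite a (le_trans b).
  - move=> t /andP[a b]; apply: hL; first by rewrite ltW // ltW // (lt_le_trans b).
    by apply: sq_lt1; apply: hQ; rewrite a b.
have claim t : 0 <= t <= T -> Q t < 1.
  move=> tI; apply/negPn/negP; rewrite -leNgt => Qt.
  pose S := [set s | 0 <= s <= T /\ 1 <= Q s].
  have Sne : S !=set0 by exists t.
  have Slb : has_lbound S by exists 0 => s [/andP[]].
  pose tau := inf S.
  have tau0 : 0 <= tau by apply: lb_le_inf => // s [/andP[]].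
  have tauT : tau <= T.
    by apply: (le_trans (ge_inf Slb (conj tI Qt))); case/andP: (tI).
  have tauI : 0 <= tau <= T by rewrite tau0 tauT.
  have below s : 0 <= s < tau -> Q s < 1.
    move=> /andP[s0 st]; rewrite ltNge; apply/negP => Qs.
    have : tau <= s by apply: ge_inf => //; split => //; rewrite s0 (le_trans (ltW st)).
    by rewrite leNgt st.
  have Qtau : 1 <= Q tau.
    rewrite leNgt; apply/negP => Qlt.
    have dQ := is_derive_sq (is_deriveB (du tau tauI) (dz tau tauI)).
    have Qc : Q @ tau --> Q tau.
      by apply/differentiable_continuous/derivable1_diffP; exact: ex_derive.
    have H : \forall t \near tau, Q t < 1 by apply: (cvgr_lt _ Qc 1 Qlt).
    have [e /= e0 He] := iffLR (nbhs_ballP _ _) H.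
    have [s Ss ste] := inf_adherent e0 (conj Sne Slb).
    have tls : tau <= s by exact: ge_inf.
    case: Ss => _ Qs.
    have : Q s < 1.
      apply: He; rewrite -ball_normE /ball_ /= ler0_norm ?subr_le0 //.
      by move: ste; lra.
    by rewrite ltNge Qs.
  have hb r : 0 < r < tau -> Q r < 1.
    by move=> /andP[a b]; apply: below; rewrite ltW.
  have [h1 _] := G tau tauI hb.
  have : Q tau < 1.
    apply: le_lt_trans h1 _; apply: le_lt_trans small.
    rewrite ler_wpM2l ?sq_ge0 // ler_expR ler_wpM2l //.
  by rewrite ltNge Qtau.
have TI : 0 <= T <= T by rewrite lexx T0.
have hT r : 0 < r < T -> Q r < 1.
  by move=> /andP[a b]; apply: claim; rewrite ltW // ltW.
exact: (G T TI hT).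
Qed.



Lemma deriv_eps {V : normedModType R} (g : R -> V) (l : V) :
  (fun h => h^-1 *: (g h - g 0)) @ 0^' --> l -> forall e : R, 0 < e ->
  \forall h \near 0^', `|g h - g 0 - h *: l| <= e * `|h|.
Proof.
move=> H e e0; move/cvgrPdist_le: H => /(_ e e0) H.
near=> h.
have hn0 : h != 0 by near: h; exact: nbhs_dnbhs_neq.
have Hh : `|l - h^-1 *: (g h - g 0)| <= e by near: h; exact: H.
have -> : g h - g 0 - h *: l = - (h *: (l - h^-1 *: (g h - g 0))).
  by rewrite scalerBr scalerA divff // scale1r opprB.
by rewrite normrN normrZ mulrC ler_wpM2r.
Unshelve. all: by end_near. Qed.

Lemma sq0 n : sq (0 : 'rV[R]_n) = 0.
Proof. by rewrite /sq big1 // => i _; rewrite mxE expr0n. Qed.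

Lemma sq_le0 n (w : 'rV[R]_n) : sq w <= 0 -> w = 0.
Proof.
move=> h; have := sq_ge w; move=> h2.
have : `|w| ^+ 2 <= 0 by apply: le_trans h.
rewrite (@le_eqVlt _ _ _ 0) ltNge sqr_ge0 orbF sqrf_eq0 normr_eq0 => /eqP //.
Qed.

Lemma app n (f : 'rV[R]_n -> 'rV[R]_n) (x0 u : R -> 'rV[R]_n) (T L c B0 h : R) :
  0 <= T -> 0 <= L -> 1 + n%:R * L ^+ 2 <= c -> `|h| <= 1 ->
  (forall x y, `|x| <= B0 + 1 -> `|y| <= B0 + 1 -> `|f y - f x| <= L * `|y - x|) ->
  (forall s, -1 <= s <= T + 1 -> `|x0 s| <= B0) ->
  (forall t : R, is_derive t 1 x0 (f (x0 t))) ->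
  (forall t : R, 0 <= t <= T -> is_derive t 1 u (f (u t))) ->
  sq (u 0 - x0 h) * expR (c * T) < 1 ->
  sq (u T - x0 (T + h)) <= sq (u 0 - x0 h) * expR (c * T) /\
  sq (u 0 - x0 h) <= sq (u T - x0 (T + h)) * expR (c * T).
Proof.
move=> T0 L0 hc h1 hL hB dx du small.
have := @bootstrap n f u (fun t => x0 (t + h)) T L c T0 L0 hc du.
rewrite add0r; apply => //.
- by move=> t _; apply: is_derive_shiftT.
- move=> t y /andP[t0 tT] yz.
  have zB : `|x0 (t + h)| <= B0.
    apply: hB; move: h1; rewrite ler_norml => /andP[a b].
    by apply/andP; split; lra.
  apply: hL; first by lra.
  have := ler_normD (y - x0 (t + h)) (x0 (t + h)); rewrite subrK.
  by move=> H; lra.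
Qed.


Lemma small_arith (sa an X D eps N K C : R) : 0 <= N -> 0 < K -> 0 <= D -> 0 <= eps ->
  sa <= N * an ^+ 2 -> 0 <= an -> an <= X * (D + eps) -> C = N * K * (D + eps) ^+ 2 ->
  0 < X -> X < 1 -> X < 1 / (C + 1) -> sa * K < 1.
Proof.
move=> N0 K0 D0 e0 h1 a0 h2 CE X0 X1 X2.
have C0 : 0 <= C.
  by rewrite CE; apply: mulr_ge0; [apply: mulr_ge0 => //; exact: ltW | exact: sqr_ge0].
have h3 : an ^+ 2 <= X ^+ 2 * (D + eps) ^+ 2.
  rewrite -exprMn; apply: lerXn2r; rewrite ?nnegrE //; exact: le_trans h2.
have h4 : sa * K <= C * X ^+ 2.
  rewrite CE; apply: (le_trans (ler_wpM2r (ltW K0) h1)).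
  have := ler_wpM2l (mulr_ge0 N0 (ltW K0)) h3.
  by move=> H; rewrite mulrAC; apply: (le_trans H); rewrite le_eqVlt; apply/orP; left; apply/eqP; ring.
move: X2; rewrite ltr_pdivlMr ?ltr_pwDr ?ltr01 // => X2.
apply: le_lt_trans h4 _; nra.
Qed.

Lemma final_arith (X D eps an sa sb bn N K : R) : 0 < X -> 0 < eps -> 0 <= N -> 0 < K ->
  D = 4 * (N * K + 1) * eps -> X * D - eps * X <= an -> an ^+ 2 <= sa ->
  sa <= sb * K -> sb <= N * bn ^+ 2 -> 0 <= bn -> bn <= 2 * eps * X -> False.
Proof.
move=> X0 e0 N0 K0 DE h1 h2 h3 h4 b0 h5.
have Y0 : 0 <= N * K by rewrite mulr_ge0 // ltW.
have h6 : bn ^+ 2 <= (2 * eps * X) ^+ 2.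
  by apply: lerXn2r; rewrite ?nnegrE // !mulr_ge0 // ltW.
have h7 : sa <= (N * K) * (2 * eps * X) ^+ 2.
  apply: (le_trans h3); apply: (le_trans (ler_wpM2r (ltW K0) h4)).
  rewrite mulrAC; exact: ler_wpM2l.
have E : X * D - eps * X = (X * eps) * (4 * (N * K) + 3) by rewrite DE; ring.
have h8 : 0 <= X * D - eps * X.
  rewrite E; apply: mulr_ge0; first by rewrite mulr_ge0 // ltW.
  by rewrite addr_ge0 // mulr_ge0.
have h9 : (X * D - eps * X) ^+ 2 <= an ^+ 2.
  by apply: lerXn2r; rewrite ?nnegrE // (le_trans h8).
have := le_trans h9 (le_trans h2 h7); rewrite E.
have Z0 : 0 < X * eps by rewrite mulr_gt0.
rewrite (_ : 2 * eps * X = 2 * (X * eps)); last by ring.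
move: (X * eps) (N * K) Z0 Y0 => Z Y Z0 Y0.
rewrite !exprMn; have W0 : 0 < Z ^+ 2 by rewrite exprn_gt0.
move: (Z ^+ 2) W0 => W W0.
have := mulr_ge0 (ltW W0) (sqr_ge0 Y); have := mulr_ge0 (ltW W0) Y0.
move=> p1 p2 H; nra.
Qed.


End Helpers.

Theorem lemma1 (R : realType) (m : nat)
  (f : 'rV[R]_m.+1 -> 'rV[R]_m.+1) (x0 : R -> 'rV[R]_m.+1) (T : R)
  (A : 'M[R]_(m, m.+1)) (Phi : R -> 'rV[R]_m -> 'rV[R]_m.+1) :
  is_C1 f -> limit_cycle f x0 T -> nondegenerate_cycle f x0 T ->
  (col_mx (derive1 x0 0) A : 'M[R]_m.+1) \in unitmx ->
  (\forall v \near (0 : 'rV[R]_m),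
     Phi 0 v = x0 0 + v *m A /\
     exists a b : R, [/\ a < 0, T < b & solution_on f a b (Phi ^~ v)]) ->
  differentiable (fun v => Phi T v) (0 : 'rV[R]_m) ->
  ~ exists w : 'rV[R]_m, 'd (fun v => Phi T v) 0 w = derive1 x0 0.
Proof.
move=> hC1 [T0 glob per _ _] _ unit hPhi dS [w hw].
have T0' : 0 <= T := ltW T0.
pose p := derive1 x0 0.
have dx : forall t : R, is_derive t 1 x0 (f (x0 t)) := glob.
have [B0 hB] : exists B0 : R, forall s, -1 <= s <= T + 1 -> `|x0 s| <= B0.
  have Kc : compact (x0 @` `[-1, T + 1]%classic).
    apply: continuous_compact; last exact: segment_compact.
    apply: derivable_within_continuous => s _; exact: ex_derive.
  have [M [_ HM]] := compact_bounded Kc.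
  exists (`|M| + 1) => s sI; apply: (HM (`|M| + 1)).
    by rewrite (le_lt_trans (ler_norm M)) // ltrDl.
  by exists s => //; rewrite /= in_itv /=.
have B00 : 0 <= B0.
  by apply: le_trans (hB 0 _); rewrite ?normr_ge0 //; apply/andP; split; lra.
have [L [L0 hL]] := lip hC1 (addr_ge0 B00 ler01).
pose c := 1 + m.+1%:R * L ^+ 2.
have hc : 1 + m.+1%:R * L ^+ 2 <= c by [].
pose K := expR (c * T).
have [r /= r0 Hr] := iffLR (nbhs_ballP _ _) hPhi.
have HP v : `|v| < r -> Phi 0 v = x0 0 + v *m A /\
     exists a b : R, [/\ a < 0, T < b & solution_on f a b (Phi ^~ v)].
  by move=> vr; apply: Hr; rewrite -ball_normE /ball_ /= sub0r normrN.
have du v : `|v| < r -> forall t : R, 0 <= t <= T -> is_derive t 1 (Phi^~ v) (f (Phi t v)).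
  move=> vr t /andP[a b]; have [_ [a' [b' [a0 Tb sol]]]] := HP v vr.
  by apply: sol; apply/andP; split; lra.
have S0 : Phi T 0 = x0 0.
  have r0' : `|0 : 'rV[R]_m| < r by rewrite normr0.
  have [Phi0 _] := HP 0 r0'.
  have := @app R m.+1 f x0 (Phi^~ 0) T L c B0 0 T0' L0 hc.
  rewrite normr0 ler01 => /(_ isT hL hB dx (du 0 r0')).
  rewrite /= Phi0 mul0mx addr0 subrr sq0 mul0r => /(_ ltr01) [h1 _].
  have := sq_le0 h1; move/eqP; rewrite subr_eq0 addr0 => /eqP ->.
  by have := per 0; rewrite add0r.
pose d := w *m A - p.
have dz : d = 0.
  apply/eqP; apply/negP => /negP dn0.
  have dpos : 0 < `|d| by rewrite normr_gt0.
  pose N : R := m.+1%:R.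
  have N0 : 0 <= N by rewrite /N ler0n.
  have K0 : 0 < K by exact: expR_gt0.
  pose eps := `|d| / (4 * (N * K + 1)).
  have epsE : `|d| = 4 * (N * K + 1) * eps.
    by rewrite /eps mulrC divfK // mulf_neq0 // lt0r_neq0 // ltr_pwDr // mulr_ge0 // ltW.
  have eps0 : 0 < eps.
    by rewrite /eps divr_gt0 // mulr_gt0 // ltr_pwDr // mulr_ge0 // ltW.
  have conv1 : (fun h => h^-1 *: (x0 h - x0 0)) @ 0^' --> p.
    have [d1 _] := dx 0.
    have E : (fun h : R => h^-1 *: ((x0 \o shift 0) (h *: 1) - x0 0)) =
             (fun h => h^-1 *: (x0 h - x0 0)).
      by apply/funext => h /=; rewrite addr0 [h *: 1]mulr1.
    by move: d1; rewrite /derivable /p derive1E /derive E.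
  have conv2 : (fun h => h^-1 *: (Phi T (h *: w) - Phi T (0 *: w))) @ 0^' --> p.
    have d1 := @diff_derivable _ _ _ _ _ w dS.
    have E : (fun h : R => h^-1 *: (((fun v => Phi T v) \o shift 0) (h *: w) - Phi T 0)) =
             (fun h => h^-1 *: (Phi T (h *: w) - Phi T (0 *: w))).
      by apply/funext => h /=; rewrite addr0 scale0r.
    by rewrite /p -hw -deriveE //; move: d1; rewrite /derivable /derive E.
  have F1 := deriv_eps conv1 eps0.
  have F2 := deriv_eps conv2 eps0.
  pose C := N * K * (`|d| + eps) ^+ 2.
  have C0 : 0 <= C.
    by apply: mulr_ge0; [apply: mulr_ge0 => //; exact: ltW | exact: sqr_ge0].
  have F3 := @dnbhs0_lt R R 1 ltr01.
  have rw0 : 0 < r / (`|w| + 1) by rewrite divr_gt0 // ltr_pwDr.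
  have F4 := @dnbhs0_lt R R _ rw0.
  have c10 : 0 < 1 / (C + 1) by rewrite divr_gt0 // ltr_pwDr.
  have F5 := @dnbhs0_lt R R _ c10.
  have F6 := @nbhs_dnbhs_neq R 0.
  have FF : \forall h \near (0 : R)^', 
      [/\ `|x0 h - x0 0 - h *: p| <= eps * `|h|,
          `|Phi T (h *: w) - Phi T (0 *: w) - h *: p| <= eps * `|h|,
          `|h| < 1, `|h| < r / (`|w| + 1) & `|h| < 1 / (C + 1)] /\ h != 0.
    near=> h; split; last by near: h; exact: F6.
    split; near: h; [exact: F1|exact: F2|exact: F3|exact: F4|exact: F5].
  have [h [[H1 H2 H3 H4 H5] H6]] := @filter_ex _ _ (Proper_dnbhs_numFieldType (0:R)) _ FF.
  have hpos : 0 < `|h| by rewrite normr_gt0.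
  have hwr : `|h *: w| < r.
    rewrite normrZ; move: H4; rewrite ltr_pdivlMr ?ltr_pwDr // => H4.
    by apply: le_lt_trans H4; rewrite ler_wpM2l // lerDl.
  have [Phi0 _] := HP _ hwr.
  have := @app R m.+1 f x0 (Phi^~ (h *: w)) T L c B0 h T0' L0 hc (ltW H3) hL hB dx (du _ hwr).
  rewrite /= Phi0 (addrC T h) per.
  set a := x0 0 + h *: w *m A - x0 h.
  set bT := Phi T (h *: w) - x0 h.
  have aE : a = h *: d - (x0 h - x0 0 - h *: p).
    by rewrite /a /d -scalemxAl; apply/rowP => i; rewrite !mxE; ring.
  have bE : bT = (Phi T (h *: w) - Phi T (0 *: w) - h *: p) - (x0 h - x0 0 - h *: p).
    by rewrite /bT scale0r S0; apply/rowP => i; rewrite !mxE; ring.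
  rewrite -/K => Happ.
  have an_up : `|a| <= `|h| * (`|d| + eps).
    rewrite aE; apply: (le_trans (ler_normB _ _)); rewrite normrZ mulrDr lerD2l mulrC.
    exact: H1.
  have an_lo : `|h| * `|d| - eps * `|h| <= `|a|.
    have E : h *: d = a + (x0 h - x0 0 - h *: p) by rewrite aE subrK.
    have := ler_normD a (x0 h - x0 0 - h *: p); rewrite -E normrZ => H.
    by move: H H1; move: (`|h| * `|d|) (eps * `|h|) `|a| (`|x0 h - x0 0 - h *: p|) => x y z t; lra.
  have bn : `|bT| <= 2 * eps * `|h|.
    rewrite bE; apply: (le_trans (ler_normB _ _)).
    move: H1 H2; rewrite -mulrA; move: (eps * `|h|) => e; lra.
  have small : sq a * K < 1.
    exact: (small_arith N0 K0 (normr_ge0 d) (ltW eps0) (sq_le a) (normr_ge0 a) an_up (erefl C) hpos H3 H5).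
  have [_ hab] := Happ small.
  exact: (final_arith hpos eps0 N0 K0 epsE an_lo (sq_ge a) hab (sq_le bT) (normr_ge0 bT) bn).
move: dz; rewrite /d => /eqP; rewrite subr_eq0 => /eqP wAp.
pose rr : 'rV[R]_(1 + m) := row_mx (-1 : 'M[R]_1) w.
have E : rr *m col_mx p A = 0.
  by rewrite /rr mul_row_col mulNmx mul1mx wAp addNr.
have rr0 : rr = 0.
  by rewrite -[rr]mulmx1 -(mulmxV unit) mulmxA E mul0mx.
have := congr1 (fun M : 'rV[R]_(1 + m) => M ord0 (lshift m ord0)) rr0.
rewrite /= /rr row_mxEl !mxE eqxx /= => /eqP.
by rewrite oppr_eq0 oner_eq0.
Unshelve. all: by end_near.
Qed.
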